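(* Let $G$ be a Tanner graph representing a binary code $\mathcal{C}$. If either (i) $G$ is a tree, or (ii) between any two variable nodes of $G$ there is at least one path traversing only check nodes of degree two, then $G$ has either exactly one or zero irreducible lift-realizable nc-pseudocodewords.
   Context: A Tanner graph $G$ is a finite bipartite graph with variable nodes $v_1,\dots,v_n$ and check nodes; its code $\mathcal{C}$ consists of all $x\in\{0,1\}^n$ with every check node having an even number of neighbours $v_i$ with $x_i=1$. A degree-$\ell$ lift replaces each node by $\ell$ copies and each edge by a perfect matching between copy-sets; a lift-realizable pseudocodeword $p\in\mathbb{Z}_{\ge0}^n$ is obtained from a codeword of the code of a finite lift by letting $p_i$ be the number of copies of $v_i$ assigned 1. It is an nc-pseudocodeword if it is not a codeword of $\mathcal{C}$, and irreducible if it cannot be written as a sum of two or more nonzero codewords or pseudocodewords. *)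

(* Defs.v *)
From mathcomp Require Import all_boot all_order perm.
Set Implicit Arguments. Unset Strict Implicit. Unset Printing Implicit Defensive.

(* A Tanner graph with n variable nodes ('I_n) and m check nodes ('I_m);
   adj c v  <=>  check node c is adjacent to variable node v. *)
Definition tanner (n m : nat) := 'I_m -> 'I_n -> bool.

Section Tanner.
Variables (n m : nat) (adj : tanner n m).

Definition in_code (x : 'I_n -> bool) : Prop :=
  forall c : 'I_m, ~~ odd #|[set v : 'I_n | adj c v && x v]|.

(* Degree-l lift given by a perfect matching (permutation) pi c v of the
   copy sets for each edge (c,v): copy (v,a) is joined to copy (c, pi c v a). *)
Definition lift_codeword (l : nat) (pi : 'I_m -> 'I_n -> {perm 'I_l})
  (x : 'I_n -> 'I_l -> bool) : Prop :=
  forall (c : 'I_m) (b : 'I_l),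
    ~~ odd #|[set va : 'I_n * 'I_l |
                [&& adj c va.1, pi c va.1 va.2 == b & x va.1 va.2]]|.

Definition lift_realizable (p : {ffun 'I_n -> nat}) : Prop :=
  exists (l : nat) (pi : 'I_m -> 'I_n -> {perm 'I_l}) (x : 'I_n -> 'I_l -> bool),
    0 < l /\ lift_codeword pi x /\
    forall v : 'I_n, p v = #|[set a : 'I_l | x v a]|.

Definition is_codeword (p : {ffun 'I_n -> nat}) : Prop :=
  (forall v, p v <= 1) /\ in_code (fun v => p v == 1).

Definition nc_pseudocodeword (p : {ffun 'I_n -> nat}) : Prop :=
  lift_realizable p /\ ~ is_codeword p.

(* p is a sum of two or more nonzero codewords / lift-realizable
   pseudocodewords (codewords are themselves lift-realizable with l = 1,
   but we allow both explicitly). *)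
Definition reducible (p : {ffun 'I_n -> nat}) : Prop :=
  exists s : seq {ffun 'I_n -> nat},
    1 < size s /\
    (forall q, q \in s -> q != [ffun => 0] /\ (is_codeword q \/ lift_realizable q)) /\
    forall v : 'I_n, p v = \sum_(q <- s) q v.

Definition irreducible_nc_pcw (p : {ffun 'I_n -> nat}) : Prop :=
  nc_pseudocodeword p /\ ~ reducible p.

Definition tanner_rel : rel ('I_n + 'I_m) :=
  fun x y => match x, y with
             | inl v, inr c => adj c v
             | inr c, inl v => adj c v
             | _, _ => false
             end.

Definition is_tree : Prop :=
  (forall x y, connect tanner_rel x y) /\
  ~ (exists s : seq ('I_n + 'I_m), 2 < size s /\ uniq s /\ cycle tanner_rel s).

Definition check_deg (c : 'I_m) : nat := #|[set v : 'I_n | adj c v]|.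

Definition deg2_step (v w : 'I_n) : bool :=
  [exists c : 'I_m, [&& check_deg c == 2, adj c v & adj c w]].

Definition deg2_connected : Prop :=
  forall v w : 'I_n, v != w ->
    exists s : seq 'I_n, [/\ path deg2_step v s, uniq (v :: s) & last v s = w].

End Tanner.

(* Main.v *)
Require Import Defs.
From mathcomp Require Import all_boot all_order perm fingroup zify.
Set Implicit Arguments. Unset Strict Implicit. Unset Printing Implicit Defensive.

Section S.
Variables (n m : nat) (adj : tanner n m).

Lemma card_perm_pre l (s : {perm 'I_l}) (f : 'I_l -> bool) :
  #|[set b | f (s^-1%g b)]| = #|[set a | f a]|.
Proof.
rewrite -[RHS](card_imset _ (@perm_inj _ s)); apply: eq_card => b; rewrite inE.
apply/idP/imsetP => [H|[a]].
  by exists (s^-1%g b); rewrite ?inE ?permKV.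
by rewrite inE => H ->; rewrite permK.
Qed.

Lemma card_lift l (pi : 'I_m -> 'I_n -> {perm 'I_l}) x c b :
  #|[set va : 'I_n * 'I_l | [&& adj c va.1, pi c va.1 va.2 == b & x va.1 va.2]]|
  = #|[set w | adj c w && x w ((pi c w)^-1%g b)]|.
Proof.
rewrite -(card_imset _ (f:= fun w => (w, (pi c w)^-1%g b))); last by move=> w1 w2 [].
apply: eq_card => -[w a]; rewrite !inE /=.
apply/andP/imsetP.
- move=> [Ha /andP[/eqP Hb Hx]]; exists w; first by rewrite inE Ha -Hb permK Hx.
  by rewrite -Hb permK.
- move=> [w']; rewrite inE => /andP[H1 H2] [-> ->].
  by rewrite H1 permKV eqxx H2.
Qed.

Lemma liftP l (pi : 'I_m -> 'I_n -> {perm 'I_l}) x :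
  lift_codeword adj pi x <->
  forall c b, ~~ odd #|[set w | adj c w && x w ((pi c w)^-1%g b)]|.
Proof. by split=> H c b; move: (H c b); rewrite card_lift. Qed.

Lemma card_pair (v w : 'I_n) (f : 'I_n -> bool) : v != w ->
  #|[set u | ((u == v) || (u == w)) && f u]| = f v + f w.
Proof.
move=> vw; case Hv: (f v); case Hw: (f w).
- rewrite (_ : [set u | _] = [set v; w]) ?cards2 ?vw //.
  apply/setP => u; rewrite !inE; case: (eqVneq u v) => [->|uv]; rewrite ?Hv //=.
  by case: (eqVneq u w) => [->|]; rewrite ?Hw.
- rewrite (_ : [set u | _] = [set v]) ?cards1 //.
  apply/setP => u; rewrite !inE; case: (eqVneq u v) => [->|uv]; rewrite ?Hv //=.
  by case: (eqVneq u w) => [->|]; rewrite ?Hw.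
- rewrite (_ : [set u | _] = [set w]) ?cards1 //.
  apply/setP => u; rewrite !inE; case: (eqVneq u v) => [->|uv]; rewrite ?Hv ?(negbTE vw) //=.
  by case: (eqVneq u w) => [->|]; rewrite ?Hw ?andbF.
- rewrite (_ : [set u | _] = set0) ?cards0 //.
  apply/setP => u; rewrite !inE; case: (eqVneq u v) => [->|uv]; rewrite ?Hv //=.
  by case: (eqVneq u w) => [->|]; rewrite ?Hw.
Qed.

Lemma deg2_eq l (pi : 'I_m -> 'I_n -> {perm 'I_l}) x :
  lift_codeword adj pi x -> forall c v w, check_deg adj c = 2 -> adj c v -> adj c w ->
  #|[set a | x v a]| = #|[set a | x w a]|.
Proof.
move=> /liftP H c v w Hd Hv Hw.
case: (eqVneq v w) => [->//|vw].
have Nc : forall u, adj c u = (u == v) || (u == w).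
  move=> u; apply/idP/idP; last by case/orP => /eqP->.
  move=> Hu; apply/negPn/negP; rewrite negb_or => /andP[uv uw].
  have : #|u |: [set v; w]| <= check_deg adj c.
    rewrite /check_deg; apply: subset_leq_card; apply/subsetP => z; rewrite !inE.
    by case/orP => [/eqP->|/orP[]/eqP->].
  by rewrite Hd cardsU1 cards2 !inE negb_or vw uv uw.
have Hb b : x v ((pi c v)^-1%g b) = x w ((pi c w)^-1%g b).
  move: (H c b).
  rewrite (_ : [set u | _] = [set u | ((u == v) || (u == w)) && x u ((pi c u)^-1%g b)]);
    last by apply/setP => u; rewrite !inE Nc.
  rewrite card_pair //.
  by case: (x v _); case: (x w _).
rewrite -(card_perm_pre (pi c v)) -(card_perm_pre (pi c w)).
by apply: eq_card => b; rewrite !inE Hb.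
Qed.

Lemma deg1_zero l (pi : 'I_m -> 'I_n -> {perm 'I_l}) x :
  lift_codeword adj pi x -> forall c v, check_deg adj c = 1 -> adj c v ->
  #|[set a | x v a]| = 0.
Proof.
move=> /liftP H c v Hd Hv.
have Nc : forall u, adj c u = (u == v).
  move=> u; apply/idP/idP; last by move/eqP->.
  move=> Hu; apply/negPn/negP => uv.
  have : #|[set v; u]| <= check_deg adj c.
    rewrite /check_deg; apply: subset_leq_card; apply/subsetP => z; rewrite !inE.
    by case/orP => /eqP->.
  by rewrite Hd cards2 eq_sym uv.
have Hb b : x v ((pi c v)^-1%g b) = false.
  move: (H c b).
  rewrite (_ : [set u | _] = [set u | (u == v) && x u ((pi c u)^-1%g b)]);
    last by apply/setP => u; rewrite !inE Nc.
  case E: (x v _) => //.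
  rewrite (_ : [set u | _] = [set v]) ?cards1 //.
  by apply/setP => u; rewrite !inE; case: (eqVneq u v) => [->|]; rewrite ?E.
rewrite -(card_perm_pre (pi c v)).
apply/eqP; rewrite cards_eq0; apply/eqP/setP => b; by rewrite !inE Hb.
Qed.

Lemma card_sum (T : finType) (P : pred T) : #|[set t | P t]| = \sum_t (P t : nat).
Proof.
rewrite -sum1_card big_mkcond; apply: eq_bigr => t _; rewrite inE.
by case: (P t).
Qed.

Lemma lr_const (p : {ffun 'I_n -> nat}) : deg2_connected adj -> lift_realizable adj p ->
  forall v w, p v = p w.
Proof.
move=> Hc [l [pi [x [Hl [Hx Hp]]]]] v w; rewrite !Hp.
case: (eqVneq v w) => [->//|vw].
have [s [Hs _ <-]] := Hc v w vw.
elim: s v {vw} Hs => [//|u s IH] v /= /andP[st Hpath].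
rewrite -IH //.
move/existsP: st => [c /and3P[/eqP Hd Hv Hu]].
exact: deg2_eq Hx c v u Hd Hv Hu.
Qed.

Lemma lr_even (p : {ffun 'I_n -> nat}) c : odd (check_deg adj c) -> lift_realizable adj p ->
  (forall v w, p v = p w) -> forall v, ~~ odd (p v).
Proof.
move=> Hodd [l [pi [x [Hl [/liftP Hx Hp]]]]] Hpc v.
have E : \sum_b #|[set w | adj c w && x w ((pi c w)^-1%g b)]|
         = \sum_(w | adj c w) #|[set b | x w ((pi c w)^-1%g b)]|.
  under eq_bigr do rewrite card_sum.
  rewrite exchange_big /= (bigID (fun w => adj c w)) /= [X in _ + X]big1 ?addn0.
    by apply: eq_bigr => w Hw; rewrite card_sum; apply: eq_bigr => b _; rewrite Hw.
  by move=> w /negbTE Hw; apply: big1 => b _; rewrite Hw.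
have E2 : \sum_(w | adj c w) #|[set b | x w ((pi c w)^-1%g b)]| = check_deg adj c * p v.
  rewrite /check_deg -sum_nat_const.
  apply: eq_big => [w|w _]; first by rewrite inE.
  by rewrite card_perm_pre -Hp (Hpc w v).
have : ~~ odd (\sum_b #|[set w | adj c w && x w ((pi c w)^-1%g b)]|).
  apply: (big_ind (fun k => ~~ odd k)) => //.
    by move=> a b Ha Hb; rewrite oddD (negbTE Ha) (negbTE Hb).
by rewrite E E2 oddM Hodd.
Qed.

Definition jn (d i : nat) := if i.+1 == d then 0 else i.+1.
Definition oo (k : nat) : 'I_(n.+2) := inord k.
Definition sc (c : 'I_m) := enum [set v | adj c v].
Definition piC (c : 'I_m) (v : 'I_n) : {perm 'I_(n.+2)} :=
  (tperm (oo 0) (oo (2 + index v (sc c))) *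
   tperm (oo 1) (oo (2 + jn (size (sc c)) (index v (sc c)))))%g.

Lemma ooK k : k < n.+2 -> val (oo k) = k.
Proof. by move=> H; apply: inordK. Qed.

Lemma oo_eq (b : 'I_(n.+2)) k : k < n.+2 -> (b == oo k) = (val b == k).
Proof. by move=> H; rewrite -val_eqE /= ooK. Qed.

Lemma sc_mem c w : (w \in sc c) = adj c w.
Proof. by rewrite mem_enum inE. Qed.

Lemma sc_size c : size (sc c) = check_deg adj c.
Proof. by rewrite /check_deg cardE. Qed.

Lemma sc_le c : size (sc c) <= n.
Proof. by rewrite sc_size /check_deg -[X in _ <= X]card_ord; apply: max_card. Qed.

Lemma arith d i k : 2 <= d -> i < d -> k < d ->
  ((k == i) || (k == jn d i)) = ((i == k) || (i == (if k == 0 then d.-1 else k.-1))).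
Proof.
rewrite /jn => H1 H2 H3.
case: ifP => /eqP E1; case: ifP => /eqP E2; apply/idP/idP => /orP[] /eqP H; apply/orP;
  first [left; apply/eqP; lia | right; apply/eqP; lia].
Qed.

Lemma piC_val c v : adj c v -> 2 <= size (sc c) ->
  piC c v (oo 0) = oo (2 + index v (sc c)) /\
  piC c v (oo 1) = oo (2 + jn (size (sc c)) (index v (sc c))).
Proof.
move=> Hv H2.
have Hi : index v (sc c) < size (sc c) by rewrite index_mem sc_mem.
have Hle := sc_le c.
have Hj : jn (size (sc c)) (index v (sc c)) < size (sc c).
  by rewrite /jn; case: ifP => /eqP; lia.
have Hij : index v (sc c) != jn (size (sc c)) (index v (sc c)).
  by rewrite /jn; case: ifP => /eqP; lia.
have neq a b : a < n.+2 -> b < n.+2 -> a != b -> oo a != oo b.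
  by move=> Ha Hb Hab; rewrite -val_eqE /= !ooK.
rewrite !permM tpermL; split.
  rewrite tpermD // neq //; lia.
rewrite (@tpermD _ (oo 0) _ (oo 1)); first by rewrite tpermL.
  by apply: neq; lia.
by apply: neq; lia.
Qed.

Lemma inv_lt2 (s : {perm 'I_(n.+2)}) (b : 'I_(n.+2)) :
  (val (s^-1%g b) < 2) = (b == s (oo 0)) || (b == s (oo 1)).
Proof.
have E a : (b == s a) = (s^-1%g b == a).
  by apply/eqP/eqP => [->|<-]; rewrite ?permK ?permKV.
rewrite !E !oo_eq //.
by case: (s^-1%g b) => [[|[|k]] Hk].
Qed.


Lemma idx_nth (T : eqType) (w0 : T) (s : seq T) k w : uniq s -> k < size s ->
  ((w \in s) && (index w s == k)) = (w == nth w0 s k).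
Proof.
move=> Hu Hk; case: (boolP (w \in s)) => Hw /=.
  by apply/eqP/eqP => [<-|->]; [rewrite nth_index | rewrite index_uniq].
apply/esym/negbTE; apply: contra Hw => /eqP ->; exact: mem_nth.
Qed.

Lemma two_lr : (forall c, check_deg adj c != 1) -> lift_realizable adj [ffun => 2].
Proof.
move=> H1; exists n.+2, piC, (fun v a => val a < 2); split=> //; split; last first.
  move=> v; rewrite ffunE.
  rewrite (_ : [set a : 'I_(n.+2) | val a < 2] = [set oo 0; oo 1]) ?cards2.
    by rewrite -val_eqE /= !ooK.
  by apply/setP => a; rewrite !inE !oo_eq //; case: a => [[|[|k]] Hk].
apply/liftP => c b /=.
have Hle := sc_le c.
have Hu : uniq (sc c) by apply: enum_uniq.
set d := size (sc c).
have Hdd : size (sc c) = d by [].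
clearbody d.
rewrite Hdd in Hle.
have [d0|dpos] := eqVneq d 0.
  rewrite (_ : [set w | _] = set0) ?cards0 //.
  apply/setP => w; rewrite !inE -sc_mem.
  by move: d0; rewrite -Hdd => /eqP; rewrite size_eq0 => /eqP ->.
have H2 : 2 <= d.
  move: (H1 c); rewrite -sc_size Hdd; move: dpos; lia.
have Eset : [set w | adj c w && (val ((piC c w)^-1%g b) < 2)] =
   [set w | (w \in sc c) && ((val b == 2 + index w (sc c)) ||
                             (val b == 2 + jn d (index w (sc c))))].
  apply/setP => w; rewrite !inE -sc_mem.
  case Hw: (w \in sc c) => //=.
  have Hi : index w (sc c) < d by rewrite -Hdd index_mem.
  have Hj : jn d (index w (sc c)) < d by rewrite /jn; case: ifP => /eqP; lia.
  rewrite sc_mem in Hw.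
  have [E0 E1] := piC_val Hw (ltac:(by rewrite Hdd)).
  rewrite inv_lt2 E0 E1 Hdd !oo_eq; [by [] | | ].
    by move: Hj Hle; move: (jn d _) => j; clear; lia.
  by move: Hi Hle; move: (index _ _) => j; clear; lia.
rewrite Eset.
have [Hb|Hb] := boolP ((2 <= val b) && (val b < 2 + d)); last first.
  rewrite (_ : [set w | _] = set0) ?cards0 //.
  apply/setP => w; rewrite !inE.
  case Hw: (w \in sc c) => //=.
  have Hi : index w (sc c) < d by rewrite -Hdd index_mem.
  have Hj : jn d (index w (sc c)) < d by rewrite /jn; case: ifP => /eqP; lia.
  apply/negbTE; move: Hb Hi Hj; move: (jn d _) => j; move: (index _ _) => i.
  by rewrite /=; move: (nat_of_ord b) => bb; clear; lia.
have npos : 0 < n by lia.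
pose w0 : 'I_n := Ordinal npos.
set k := val b - 2.
set k' := if k == 0 then d.-1 else k.-1.
have Hk : k < d by lia.
have Hk' : k' < d by rewrite /k'; case: ifP => /eqP; lia.
have Hkk' : k != k' by rewrite /k'; case: ifP => /eqP; lia.
rewrite (_ : [set w | _] = [set nth w0 (sc c) k; nth w0 (sc c) k']).
  by rewrite cards2 nth_uniq ?Hdd // Hkk'.
apply/setP => w; rewrite !inE.
case Hw: (w \in sc c) => /=; last first.
  apply/esym/norP; split; apply/negP => /eqP E; move: Hw; by rewrite E mem_nth ?Hdd.
have Hi : index w (sc c) < d by rewrite -Hdd index_mem.
have -> : ((nat_of_ord b == 2 + index w (sc c)) || (nat_of_ord b == 2 + jn d (index w (sc c)))) =
          ((k == index w (sc c)) || (k == jn d (index w (sc c)))).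
  move: Hb; rewrite /k /=; move: (jn d _) => j; move: (index _ _) => i.
  by move: (nat_of_ord b) => bb; clear; lia.
rewrite arith // -!(idx_nth w0) ?Hdd // Hw.
by [].
Qed.

End S.

Section U.
Variables (n m l : nat).

Definition acyc (adj : tanner n m) :=
  ~ (exists s : seq ('I_n + 'I_m), 2 < size s /\ uniq s /\ path.cycle (tanner_rel adj) s).

Lemma untwist k : forall adj : tanner n m,
  #|[set e : 'I_m * 'I_n | adj e.1 e.2]| <= k -> acyc adj ->
  forall pi : 'I_m -> 'I_n -> {perm 'I_l},
  exists sg : 'I_n -> {perm 'I_l}, exists tau : 'I_m -> {perm 'I_l},
  forall c v, adj c v -> (sg v * pi c v)%g = tau c.
Proof.
elim: k => [|k IH] adj Hk Hac pi.
  exists (fun _ => 1%g), (fun _ => 1%g) => c v Hcv; exfalso.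
  move: Hk; rewrite leqn0 cards_eq0 => /eqP E.
  by have := in_set0 (c, v); rewrite -E inE Hcv.
case: (pickP (fun e : 'I_m * 'I_n => adj e.1 e.2)) => [[c v] /= Hcv | none]; last first.
  by exists (fun _ => 1%g), (fun _ => 1%g) => c v Hcv; move: (none (c, v)); rewrite /= Hcv.
pose adj' : tanner n m := fun c' v' => adj c' v' && ((c', v') != (c, v)).
have sub : subrel (tanner_rel adj') (tanner_rel adj).
  by move=> [x|x] [y|y] //=; case/andP.
have Hk' : #|[set e : 'I_m * 'I_n | adj' e.1 e.2]| <= k.
  move: Hk; rewrite (cardsD1 (c, v)) inE Hcv add1n ltnS.
  congr (_ <= _); apply: eq_card => -[c' v']; rewrite !inE /adj' /=.
  by rewrite andbC.
have Hac' : acyc adj'.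
  move=> [s [H1 [H2 H3]]]; apply: Hac; exists s; split=> //; split=> //.
  exact: sub_cycle sub _ H3.
have [sg [tau Hst]] := IH adj' Hk' Hac' pi.
pose K u := connect (tanner_rel adj') (inl v) u.
have Kv : K (inl v) by exact: connect0.
have Kc : ~~ K (inr c).
  apply/negP => /connectP [p Hp Hl].
  case: (shortenP Hp) Hl => p' Hp' Hu _ Hl.
  apply: Hac; exists (inl v :: p'); split; last split => //.
    case: p' Hp' Hu Hl => [|y [|z p']] //= /andP[Hy _] _ Hl.
    by move: Hy; rewrite -Hl /= /adj' Hcv eqxx.
  rewrite /path.cycle rcons_path (sub_path sub Hp') -Hl /=.
  exact: Hcv.
have Kcl : forall c' v', adj' c' v' -> K (inl v') = K (inr c').
  move=> c' v' H; apply/idP/idP => HK.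
    by apply: connect_trans HK (connect1 _).
  by apply: connect_trans HK (connect1 _).
pose dl := (tau c * (sg v * pi c v)^-1)%g.
exists (fun u => if K (inl u) then (dl * sg u)%g else sg u).
exists (fun c' => if K (inr c') then (dl * tau c')%g else tau c').
move=> c' v' Hcv'.
case: (eqVneq (c', v') (c, v)) => [[-> ->]|ne].
  rewrite Kv (negbTE Kc) /dl.
  by rewrite -!mulgA mulVg mulg1.
have H' : adj' c' v' by rewrite /adj' Hcv' ne.
rewrite (Kcl _ _ H'); case: (K (inr c')); last exact: Hst.
by rewrite -mulgA Hst.
Qed.
End U.

Section F.
Variables (n m : nat) (adj : tanner n m).

Lemma cw_zero (p : {ffun 'I_n -> nat}) : (forall v, p v = 0) -> is_codeword adj p.
Proof.
move=> H; split; first by move=> v; rewrite H.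
move=> c; rewrite (_ : [set v | _] = set0) ?cards0 //.
by apply/setP => v; rewrite !inE H andbF.
Qed.

Lemma cw_one (p : {ffun 'I_n -> nat}) : (forall v, p v = 1) ->
  (forall c, ~~ odd (check_deg adj c)) -> is_codeword adj p.
Proof.
move=> H Hc; split; first by move=> v; rewrite H.
move=> c; rewrite (_ : [set v | _] = [set v | adj c v]); first exact: Hc.
by apply/setP => v; rewrite !inE H eqxx andbT.
Qed.

Lemma red_nseq (r p : {ffun 'I_n -> nat}) k : 1 < k -> r != [ffun => 0] ->
  (is_codeword adj r \/ lift_realizable adj r) -> (forall v, p v = k * r v) ->
  reducible adj p.
Proof.
move=> Hk Hr Hc Hp; exists (nseq k r); split; first by rewrite size_nseq.
split; first by move=> q; rewrite mem_nseq => /andP[_ /eqP->].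
by move=> v; rewrite big_nseq iter_addn_0 mulnC Hp.
Qed.

Lemma tree_no_irr : acyc adj -> forall p, irreducible_nc_pcw adj p -> False.
Proof.
move=> Hac p [[[l [pi [x [Hl [Hx Hp]]]]] Hnc] Hirr].
have [sg [tau Hst]] := untwist (leqnn _) Hac pi.
pose y (j : 'I_l) : {ffun 'I_n -> nat} := [ffun v => (x v (sg v j) : nat)].
have Hy j : is_codeword adj (y j).
  split; first by move=> v; rewrite ffunE; case: (x v _).
  move=> c; move/liftP: Hx => /(_ c (tau c j)).
  congr (~~ odd _); apply: eq_card => w; rewrite !inE ffunE.
  case Hw: (adj c w) => //=.
  rewrite -(Hst _ _ Hw) permM permK.
  by case: (x w _).
have Hsum v : p v = \sum_j y j v.
  rewrite Hp card_sum (reindex_inj (@perm_inj _ (sg v))).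
  by apply: eq_bigr => j _; rewrite ffunE.
pose s := [seq q <- map y (index_enum 'I_l) | q != [ffun => 0]].
have Hs v : p v = \sum_(q <- s) q v.
  rewrite Hsum big_filter big_map [LHS](bigID (fun j => y j != [ffun => 0])) /=.
  rewrite [X in _ + X]big1 ?addn0 //.
  by move=> j /negPn /eqP ->; rewrite ffunE.
have Hmem q : q \in s -> q != [ffun => 0] /\ is_codeword adj q.
  rewrite mem_filter => /andP[Hq /mapP [j _ Eq]]; split => //.
  by rewrite Eq; exact: Hy.
case Es: s Hs Hmem => [|q1 [|q2 s']] Hs Hmem.
- apply: Hnc; apply: cw_zero => v; by rewrite Hs big_nil.
- apply: Hnc; have [_ Hq1] := Hmem q1 (mem_head _ _).
  suff -> : p = q1 by [].
  by apply/ffunP => v; rewrite Hs big_cons big_nil addn0.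
- apply: Hirr; exists [:: q1, q2 & s']; split => //; split => //.
  by move=> q /Hmem [H1 H2]; split => //; left.
Qed.

Lemma irr_two : deg2_connected adj -> forall p, irreducible_nc_pcw adj p ->
  forall v, p v = 2.
Proof.
move=> Hd p [[Hlr Hnc] Hirr] v0.
have Hc := lr_const Hd Hlr.
have Hcv v : p v = p v0 by apply: Hc.
case: (boolP [forall c, ~~ odd (check_deg adj c)]) => [/forallP Hall | Hex].
  exfalso.
  case Ea: (p v0) => [|[|a]].
  - by apply: Hnc; apply: cw_zero => v; rewrite Hcv.
  - by apply: Hnc; apply: cw_one => // v; rewrite Hcv.
  - apply: Hirr; apply: (@red_nseq [ffun => 1] p a.+2) => //.
    + by apply/eqP => /ffunP /(_ v0); rewrite !ffunE.
    + by left; apply: cw_one => // v; rewrite ffunE.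
    + by move=> v; rewrite ffunE Hcv Ea muln1.
have [c Hodd] : exists c, odd (check_deg adj c).
  by move: Hex; rewrite negb_forall => /existsP [c]; rewrite negbK; exists c.
have Hev := lr_even Hodd Hlr Hc v0.
case: (boolP [exists c, check_deg adj c == 1]) => [/existsP [c1 /eqP H1] | Hno].
  exfalso.
  have [u Hu] : exists u, adj c1 u.
    have : 0 < check_deg adj c1 by rewrite H1.
    by rewrite /check_deg card_gt0 => /set0Pn [u]; rewrite inE; exists u.
  case: Hlr => [l [pi [x [Hl [Hx Hp]]]]].
  have := deg1_zero Hx H1 Hu; rewrite -Hp => H0.
  by apply: Hnc; apply: cw_zero => v; rewrite Hcv -(Hcv u).
have H2 : lift_realizable adj [ffun => 2].
  apply: two_lr => c2; apply/negP => Hc1; move: Hno; rewrite negb_exists => /forallP /(_ c2).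
  by rewrite Hc1.
case Ea: (p v0) Hev => [|[|[|[|a]]]] //= Hev.
- by exfalso; apply: Hnc; apply: cw_zero => v; rewrite Hcv.
- exfalso; apply: Hirr; apply: (@red_nseq [ffun => 2] p (a./2).+2).
  + by [].
  + by apply/eqP => /ffunP /(_ v0); rewrite !ffunE.
  + by right.
  + move=> v; rewrite ffunE Hcv Ea.
    have Ha : odd a = false by move: Hev; case: (odd a).
    by rewrite -{1}(odd_double_half a) Ha add0n -muln2; lia.
Qed.
End F.

Theorem claim2 (n m : nat) (adj : tanner n m) :
  is_tree adj \/ deg2_connected adj ->
  forall p q : {ffun 'I_n -> nat},
    irreducible_nc_pcw adj p -> irreducible_nc_pcw adj q -> p = q.
Proof.
move=> [[_ Hac]|Hd] p q Hp Hq.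
  by exfalso; exact: tree_no_irr Hac p Hp.
by apply/ffunP => v; rewrite (irr_two Hd Hp) (irr_two Hd Hq).
Qed.
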